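(* Consider the tabular parametrization $\theta=\pi\in\Delta_{\mathcal A}^{\mathcal S}$, $\lambda(\theta)=\Lambda(\pi)$, and suppose $\xi_s>0$ for all $s$. Let $F$ be concave on an open neighbourhood of $\mathcal L$ and suppose $R(\pi):=F(\Lambda(\pi))$ is differentiable on $\Delta_{\mathcal A}^{\mathcal S}$ with $L$-Lipschitz gradient $\nabla_\pi R$. Let $\pi^*$ be a global maximizer of $R$ over $\Delta_{\mathcal A}^{\mathcal S}$, $\pi^0\in\Delta_{\mathcal A}^{\mathcal S}$, and $\pi^{k+1}=\mathrm{Proj}_{\Delta_{\mathcal A}^{\mathcal S}}\{\pi^k+\frac1L\nabla_\pi R(\pi^k)\}$. Then for all $k\ge1$, $$R(\pi^* )-R(\pi^k)\le\frac{20L|\mathcal S|}{(1-\gamma)^2(k+1)}\Big\|d^{\pi^*}_\xi/\xi\Big\|_\infty^2.$$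
   Context: Finite MDP with states $\mathcal S$, actions $\mathcal A$, transition matrices $P_a$, initial distribution $\xi$, discount $\gamma\in(0,1)$. $\Delta_{\mathcal A}^{\mathcal S}$ is the set of tabular policies ($\pi(\cdot|s)$ a probability distribution on $\mathcal A$ for each $s$). $\Lambda_{sa}(\pi)=\sum_{t\ge0}\gamma^t\mathbb P(s_t=s,a_t=a\mid\pi,s_0\sim\xi)$ is the occupancy measure, and $\mathcal L=\{\lambda\ge0:\sum_a(I-\gamma P_a^\top)\lambda_a=\xi\}=\Lambda(\Delta_{\mathcal A}^{\mathcal S})$. The discounted state visitation distribution is $d^\pi_\xi(s)=(1-\gamma)\sum_{t\ge0}\gamma^t\mathbb P(s_t=s\mid\pi,s_0\sim\xi)$; $d^{\pi^*}_\xi/\xi$ is the componentwise ratio. $\mathrm{Proj}$ is Euclidean projection. *)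

(* Defs.v *)
From HB Require Import structures.
From mathcomp Require Import all_boot all_order all_algebra.
From mathcomp Require Import all_classical all_reals all_analysis.
Set Implicit Arguments. Unset Strict Implicit. Unset Printing Implicit Defensive.
Import Order.TTheory GRing.Theory Num.Theory.
Import numFieldNormedType.Exports.
Local Open Scope classical_set_scope.
Local Open Scope ring_scope.

(* A (tabular) policy, and more generally
   any point of R^{S x A}, is a matrix 'M[R]_(nS, nA), entry (s, a) = pi(a|s).
   Transition kernel: P a s s' = P(s_{t+1} = s' | s_t = s, a_t = a). *)

Section MDP.
Variables (R : realType) (nS nA : nat).
Variable P : 'I_nA -> 'M[R]_nS.
Variable xi : 'rV[R]_nS.
Variable gamma : R.

Definition policies : set 'M[R]_(nS, nA) :=
  [set pi | (forall s a, 0 <= pi s a) /\ (forall s, \sum_a pi s a = 1)].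

Fixpoint state_dist (pi : 'M[R]_(nS, nA)) (t : nat) : 'rV[R]_nS :=
  match t with
  | 0%N => xi
  | t'.+1 => \row_s' \sum_s \sum_a
                (state_dist pi t' 0 s * pi s a * P a s s')
  end.

Definition rseries (u : nat -> R) : R := limn (fun n => \sum_(0 <= t < n) u t).

Definition occupancy (pi : 'M[R]_(nS, nA)) : 'M[R]_(nS, nA) :=
  \matrix_(s, a) rseries (fun t => gamma ^+ t * (state_dist pi t 0 s * pi s a)).

Definition dvisit (pi : 'M[R]_(nS, nA)) (s : 'I_nS) : R :=
  (1 - gamma) * rseries (fun t => gamma ^+ t * state_dist pi t 0 s).

Definition occ_polytope : set 'M[R]_(nS, nA) :=
  [set lam | (forall s a, 0 <= lam s a) /\
     (forall s', \sum_a (lam s' a - gamma * \sum_s P a s s' * lam s a) = xi 0 s')].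

End MDP.

Definition frob_norm (R : realType) m n (x : 'M[R]_(m, n)) : R :=
  Num.sqrt (\sum_i \sum_j x i j ^+ 2).

Definition grad (R : realType) m n (f : 'M[R]_(m, n) -> R^o) (x : 'M[R]_(m, n))
  : 'M[R]_(m, n) := \matrix_(i, j) ('d f x) (delta_mx i j : 'M[R]_(m, n)).

Definition sup_norm (R : realType) n (v : 'I_n -> R) : R :=
  \big[Num.max/0]_i `|v i|.

(* Main.v *)
Require Import Defs.
From HB Require Import structures.
From mathcomp Require Import all_boot all_order all_algebra.
From mathcomp Require Import all_classical all_reals all_analysis.
From mathcomp.algebra_tactics Require Import ring lra.
Import Order.TTheory GRing.Theory Num.Theory.
Import numFieldNormedType.Exports.
Local Open Scope classical_set_scope.
Local Open Scope ring_scope.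
Set Implicit Arguments. Unset Strict Implicit. Unset Printing Implicit Defensive.

Definition ip {R : realType} {m n : nat} (a b : 'M[R]_(m,n)) : R := \sum_i \sum_j a i j * b i j.

Lemma diff_ip (R : realType) m n (f : 'M[R]_(m,n) -> R^o) (a d : 'M[R]_(m,n)) :
  'd f a d = ip (grad f a) d.
Proof.
rewrite {1}(matrix_sum_delta d) linear_sum /ip; apply: eq_bigr => i _.
rewrite linear_sum; apply: eq_bigr => j _.
by rewrite linearZ /= mxE mulrC.
Qed.

Lemma line_derive (R : realType) m n (f : 'M[R]_(m,n) -> R^o) (x d : 'M[R]_(m,n)) (t : R) :
  differentiable f (x + t *: d) ->
  is_derive t 1 (fun s : R => f (x + s *: d)) (ip (grad f (x + t *: d)) d).
Proof.
move=> df.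
have E : (fun h : R => h^-1 *: (((fun s : R => f (x + s *: d)) \o shift t) (h *: 1) - f (x + t *: d)))
   = (fun h : R => h^-1 *: ((f \o shift (x + t *: d)) (h *: d) - f (x + t *: d))).
  apply: funext => h /=; congr (_ *: (f _ - _)).
  have -> : h%:A = h by rewrite /GRing.scale /= mulr1.
  by rewrite scalerDl addrCA addrA.
have dv : derivable (fun s : R => f (x + s *: d)) t 1.
  by rewrite /derivable E; exact: (diff_derivable df).
have := derivableP dv.
suff -> : 'D_1 (fun s : R => f (x + s *: d)) t = ip (grad f (x + t *: d)) d by [].
by rewrite /derive E -/(derive f (x + t *: d) d) deriveE // diff_ip.
Qed.

Lemma sumrDx (V : nmodType) (I : Type) (r : seq I) (P : pred I) (F G : I -> V) :
  \sum_(i <- r | P i) F i + \sum_(i <- r | P i) G i = \sum_(i <- r | P i) (F i + G i).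
Proof. by rewrite big_split. Qed.

Definition sq {R : realType} {m n : nat} (a : 'M[R]_(m,n)) : R := ip a a.

Lemma sq_ge0 (R : realType) m n (a : 'M[R]_(m,n)) : 0 <= sq a.
Proof. by apply: sumr_ge0 => i _; apply: sumr_ge0 => j _; rewrite -expr2 sqr_ge0. Qed.

Lemma ipBl (R : realType) m n (a b d : 'M[R]_(m,n)) : ip (a - b) d = ip a d - ip b d.
Proof.
rewrite /ip -sumrB; apply: eq_bigr => i _; rewrite -sumrB; apply: eq_bigr => j _.
by rewrite !mxE mulrBl.
Qed.

Lemma ip_bound (R : realType) m n (G d : 'M[R]_(m,n)) (e : R) :
  0 < e -> sq G <= e ^+ 2 * sq d -> `|ip G d| <= e * sq d.
Proof.
move=> e0 hG.
have key : forall u v : R, 2 * e * `|u * v| <= e ^+ 2 * (v * v) + u * u.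
  move=> u v; rewrite normrM -[u * u]real_normK ?num_real // -[v * v]real_normK ?num_real //.
  have := normr_ge0 u; have := normr_ge0 v.
  move: (`|u|) (`|v|) => a b ha hb; have := sqr_ge0 (e * b - a); nra.
have h2 : 2 * e * `|ip G d| <= e ^+ 2 * sq d + sq G.
  rewrite /ip /sq /ip mulr_sumr sumrDx.
  apply: (le_trans (ler_wpM2l _ (ler_norm_sum _ _ _))); first by rewrite mulr_ge0 // ltW.
  rewrite mulr_sumr; apply: ler_sum => i _.
  apply: (le_trans (ler_wpM2l _ (ler_norm_sum _ _ _))); first by rewrite mulr_ge0 // ltW.
  rewrite !mulr_sumr sumrDx; apply: ler_sum => j _; exact: key.
have := sq_ge0 d; have := normr_ge0 (ip G d); move: (`|ip G d|) (sq d) (sq G) h2 hG.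
move=> a b c h1 h2 h3 h4.
have h5 : e * a <= e * (e * b) by nra.
by rewrite ler_pM2l in h5.
Qed.

Lemma aux_eq (R : realType) (a b c : R) : a * (1 - 1/2) + b * (1/2) - c = (a - c) / 2 + (b - c) / 2.
Proof. by field. Qed.

Lemma aux_le (R : realType) (u v w : R) : `|u| <= w / 2 -> `|v| <= w -> `|v / 2 + u / 2| <= 3 / 4 * w.
Proof.
move=> hu hv; apply: (le_trans (ler_normD _ _)); rewrite !normrM.
have -> : `|2^-1 : R| = 2^-1 by rewrite ger0_norm // invr_ge0.
lra.
Qed.

Lemma descent (R : realType) m n (f : 'M[R]_(m,n) -> R^o) (L : R) (x y : 'M[R]_(m,n)) :
  0 < L ->
  (forall t, 0 <= t <= 1 -> differentiable f (x + t *: (y - x))) ->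
  (forall t, 0 <= t <= 1 -> sq (grad f (x + t *: (y - x)) - grad f x) <= (L * t) ^+ 2 * sq (y - x)) ->
  `|f y - f x - ip (grad f x) (y - x)| <= 3 / 4 * L * sq (y - x).
Proof.
move=> L0 hd hL; set d := y - x.
set g := fun s : R => f (x + s *: d).
set gd := fun s : R => ip (grad f (x + s *: d)) d.
have g0 : g 0 = f x by rewrite /g scale0r addr0.
have g1 : g 1 = f y by rewrite /g scale1r /d addrC subrK.
have gd0 : gd 0 = ip (grad f x) d by rewrite /gd scale0r addr0.
have bnd : forall c : R, 0 < c <= 1 -> `|gd c - gd 0| <= L * c * sq d.
  move=> c /andP[c0 c1]; rewrite /gd -ipBl scale0r addr0.
  apply: ip_bound; first by rewrite mulr_gt0.
  by apply: hL; rewrite c1 ltW.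
have der : forall s : R, 0 <= s <= 1 -> is_derive s 1 g (gd s).
  by move=> s hs; apply: line_derive; apply: hd.
have mvt : forall a b : R, 0 <= a -> a < b -> b <= 1 ->
    exists2 c, a < c < b & g b - g a = gd c * (b - a).
  move=> a b a0 ab b1.
  have [c hc E] : exists2 c, c \in `]a, b[ & g b - g a = gd c * (b - a).
    apply: (MVT ab).
      move=> s; rewrite in_itv /= => /andP[h1 h2]; apply: der.
      by rewrite (le_trans a0 (ltW h1)) (le_trans (ltW h2) b1).
    apply: derivable_within_continuous => s; rewrite in_itv /= => /andP[h1 h2].
    have hs : 0 <= s <= 1 by rewrite (le_trans a0 h1) (le_trans h2 b1).
    exact: (@ex_derive _ _ _ _ _ _ _ (der s hs)).
  by exists c => //; move: hc; rewrite in_itv.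
have h12 : (0 : R) < 1 / 2 by lra.
have h121 : (1 / 2 : R) <= 1 by lra.
have h1 : (1 / 2 : R) < 1 by lra.
have m1 := mvt 0 (1/2) (lexx (0:R)) h12 h121.
case: m1 => c1 /andP[c1a c1b] E1.
have m2 := mvt (1/2) 1 (ltW h12) h1 (lexx (1:R)).
case: m2 => c2 /andP[c2a c2b] E2.
have S0 := sq_ge0 d.
have b1 : `|gd c1 - gd 0| <= L * sq d / 2.
  have hc1 : 0 < c1 <= 1 by rewrite c1a (le_trans (ltW c1b)).
  apply: (le_trans (bnd c1 hc1)).
  rewrite mulrAC; apply: ler_wpM2l; first exact: mulr_ge0 (ltW L0) S0.
  by move: (ltW c1b); rewrite mul1r.
have b2 : `|gd c2 - gd 0| <= L * sq d.
  have hc2 : 0 < c2 <= 1 by rewrite (lt_trans h12 c2a) ltW.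
  apply: (le_trans (bnd c2 hc2)).
  rewrite mulrAC -[X in _ <= X]mulr1; apply: ler_wpM2l; first exact: mulr_ge0 (ltW L0) S0.
  exact: ltW.
have E : f y - f x - ip (grad f x) d = (gd c2 - gd 0) / 2 + (gd c1 - gd 0) / 2.
  rewrite -g1 -g0 -gd0; move: E1 E2.
  move: (g 0) (g (1/2)) (g 1) (gd c1) (gd c2) (gd 0) => a0 a1 a2 u v w e1 e2.
  have -> : a2 - a0 = (a2 - a1) + (a1 - a0) by rewrite addrA subrK.
  rewrite e1 e2 subr0.
  exact: aux_eq.
rewrite E; have -> : 3 / 4 * L * sq d = 3 / 4 * (L * sq d) by rewrite mulrA.
exact: aux_le.
Qed.


Lemma sqE (R : realType) m n (x : 'M[R]_(m,n)) : frob_norm x ^+ 2 = sq x.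
Proof.
rewrite /frob_norm sqr_sqrtr; last by apply: sumr_ge0 => i _; apply: sumr_ge0 => j _; rewrite sqr_ge0.
by rewrite /sq /ip; apply: eq_bigr => i _; apply: eq_bigr => j _; rewrite expr2.
Qed.

Lemma frob_ge0 (R : realType) m n (x : 'M[R]_(m,n)) : 0 <= frob_norm x.
Proof. exact: sqrtr_ge0. Qed.

Lemma sqZ (R : realType) m n (t : R) (x : 'M[R]_(m,n)) : sq (t *: x) = t ^+ 2 * sq x.
Proof.
rewrite /sq /ip mulr_sumr; apply: eq_bigr => i _; rewrite mulr_sumr; apply: eq_bigr => j _.
by rewrite !mxE; ring.
Qed.

Lemma lip_sq (R : realType) m n (G d : 'M[R]_(m,n)) (L t : R) :
  0 <= L -> 0 <= t -> frob_norm G <= L * frob_norm (t *: d) -> sq G <= (L * t) ^+ 2 * sq d.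
Proof.
move=> L0 t0 h.
have h2 : frob_norm G ^+ 2 <= (L * frob_norm (t *: d)) ^+ 2.
  by rewrite ler_pXn2r // ?nnegrE ?frob_ge0 ?mulr_ge0 ?frob_ge0.
by move: h2; rewrite exprMn sqE sqE sqZ mulrA -exprMn.
Qed.

Lemma ipC (R : realType) m n (a b : 'M[R]_(m,n)) : ip a b = ip b a.
Proof. by apply: eq_bigr => i _; apply: eq_bigr => j _; rewrite mulrC. Qed.

Lemma ipDl (R : realType) m n (a b d : 'M[R]_(m,n)) : ip (a + b) d = ip a d + ip b d.
Proof.
rewrite /ip sumrDx; apply: eq_bigr => i _; rewrite sumrDx; apply: eq_bigr => j _.
by rewrite !mxE mulrDl.
Qed.

Lemma ipZl (R : realType) m n (t : R) (a d : 'M[R]_(m,n)) : ip (t *: a) d = t * ip a d.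
Proof.
rewrite /ip mulr_sumr; apply: eq_bigr => i _; rewrite mulr_sumr; apply: eq_bigr => j _.
by rewrite !mxE mulrA.
Qed.

Lemma ipBr (R : realType) m n (a b d : 'M[R]_(m,n)) : ip d (a - b) = ip d a - ip d b.
Proof. by rewrite ipC ipBl ipC [ip b d]ipC. Qed.

Lemma ipDr (R : realType) m n (a b d : 'M[R]_(m,n)) : ip d (a + b) = ip d a + ip d b.
Proof. by rewrite ipC ipDl ipC [ip b d]ipC. Qed.

Lemma ipZr (R : realType) m n (t : R) (a d : 'M[R]_(m,n)) : ip d (t *: a) = t * ip d a.
Proof. by rewrite ipC ipZl ipC. Qed.

Lemma ip_young (R : realType) m n (a b : 'M[R]_(m,n)) : ip a b <= sq a / 4 + sq b.
Proof.
rewrite /sq /ip mulr_suml sumrDx; apply: ler_sum => i _.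
rewrite mulr_suml sumrDx; apply: ler_sum => j _.
have := sqr_ge0 (a i j / 2 - b i j); move: (a i j) (b i j) => u v h; nra.
Qed.

Lemma real_proj (R : realType) (p q : R) : 0 <= q ->
  (forall s, 0 < s <= 1 -> 0 <= 2 * s * p + s ^+ 2 * q) -> 0 <= p.
Proof.
move=> q0 h; rewrite leNgt; apply/negP => p0.
have d0 : 0 < q - p by lra.
set s := - p / (q - p).
have s0 : 0 < s by rewrite /s divr_gt0 // oppr_gt0.
have s1 : s <= 1 by rewrite /s ler_pdivrMr // mul1r; lra.
have := h s; rewrite s0 s1 => /(_ isT).
have sq_le : s * q <= - p.
  rewrite /s mulrAC ler_pdivrMr //; nra.
nra.
Qed.

Lemma sq_expand (R : realType) m n (u v : 'M[R]_(m,n)) (s : R) :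
  sq (u + s *: v) = sq u + 2 * s * ip u v + s ^+ 2 * sq v.
Proof.
rewrite /sq ipDl !ipDr !ipZl !ipZr [ip v u]ipC; ring.
Qed.

Lemma frob_le (R : realType) m n (a b : 'M[R]_(m,n)) : frob_norm a <= frob_norm b -> sq a <= sq b.
Proof.
move=> h; rewrite -!sqE; rewrite ler_pXn2r // ?nnegrE ?frob_ge0 //.
Qed.

Lemma proj_ineq (R : realType) m n (xp z y : 'M[R]_(m,n)) :
  (forall s, 0 < s <= 1 -> frob_norm (xp - z) <= frob_norm ((xp + s *: (y - xp)) - z)) ->
  0 <= ip (xp - z) (y - xp).
Proof.
move=> h; apply: (real_proj (sq_ge0 (y - xp))) => s hs.
have := frob_le (h s hs).
have -> : xp + s *: (y - xp) - z = (xp - z) + s *: (y - xp) by rewrite addrAC.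
rewrite sq_expand; set p := 2 * s * _; set q := _ * sq _; lra.
Qed.

Lemma policies_conv (R : realType) nS nA (x y : 'M[R]_(nS,nA)) (t : R) :
  policies x -> policies y -> 0 <= t <= 1 -> policies (x + t *: (y - x)).
Proof.
move=> [x0 x1] [y0 y1] /andP[t0 t1]; split.
  move=> s a; rewrite !mxE.
  have := x0 s a; have := y0 s a; move: (x s a) (y s a) => u v hu hv; nra.
move=> s.
have -> : \sum_a (x + t *: (y - x)) s a = \sum_a x s a + t * (\sum_a y s a - \sum_a x s a).
  rewrite -sumrB mulr_sumr sumrDx; apply: eq_bigr => a _.
  by rewrite !mxE mulrBr.
by rewrite x1 y1 subrr mulr0 addr0.
Qed.

Lemma descent_pol (R : realType) nS nA (f : 'M[R]_(nS,nA) -> R^o) (L : R) (x y : 'M[R]_(nS,nA)) :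
  0 < L ->
  (forall pi, policies pi -> differentiable f pi) ->
  (forall pi pi', policies pi -> policies pi' ->
     frob_norm (grad f pi - grad f pi') <= L * frob_norm (pi - pi')) ->
  policies x -> policies y ->
  `|f y - f x - ip (grad f x) (y - x)| <= 3 / 4 * L * sq (y - x).
Proof.
move=> L0 hd hL px py; apply: descent => // t ht.
  exact/hd/policies_conv.
have := hL _ _ (policies_conv px py ht) px.
have -> : x + t *: (y - x) - x = t *: (y - x) by rewrite addrAC subrr add0r.
by apply: lip_sq; [exact: ltW | case/andP: ht].
Qed.

Lemma one_step (R : realType) nS nA (f : 'M[R]_(nS,nA) -> R^o) (L : R) (x xp y : 'M[R]_(nS,nA)) :
  0 < L ->
  (forall pi, policies pi -> differentiable f pi) ->
  (forall pi pi', policies pi -> policies pi' ->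
     frob_norm (grad f pi - grad f pi') <= L * frob_norm (pi - pi')) ->
  policies x -> policies xp -> policies y ->
  (forall w, policies w ->
     frob_norm (xp - (x + L^-1 *: grad f x)) <= frob_norm (w - (x + L^-1 *: grad f x))) ->
  f y <= f xp + 7 / 4 * L * sq (y - x).
Proof.
move=> L0 hd hL px pxp py hp.
have d1 := descent_pol L0 hd hL px py.
have d2 := descent_pol L0 hd hL px pxp.
have pr : 0 <= ip (xp - (x + L^-1 *: grad f x)) (y - xp).
  apply: proj_ineq => s /andP[s0 s1]; apply: hp; apply: policies_conv => //.
  by rewrite ltW.
have ey : y - xp = (y - x) - (xp - x) by rewrite opprB addrA subrK.
move: pr.
have -> : xp - (x + L^-1 *: grad f x) = (xp - x) - L^-1 *: grad f x by rewrite opprD addrA.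
rewrite ey ipBl (ipBr (y - x) (xp - x) (xp - x)) (ipBr (y - x) (xp - x) (L^-1 *: grad f x)) !ipZl.
have yg := ip_young (xp - x) (y - x).
move: d1 d2 yg.
set Fy := f y; set Fx := f x; set Fp := f xp; set gb := ip (grad f x) (y - x).
set ga := ip (grad f x) (xp - x); set A := sq (xp - x); set B := sq (y - x).
set C := ip (xp - x) (y - x).
have -> : ip (xp - x) (xp - x) = A by [].
move=> d1 d2 yg pr.
have pr' : gb - ga <= L * (C - A).
  have : L^-1 * (gb - ga) <= C - A by lra.
  by rewrite ler_pdivrMl.
have hA : 0 <= A := sq_ge0 (xp - x).
have hB : 0 <= B := sq_ge0 (y - x).
move: d1 d2; rewrite !ler_norml => /andP[d1 d1'] /andP[d2 d2'].
nra.
Qed.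


Lemma cvg_sum_seq (R : realType) (I : Type) (r : seq I) (f : nat -> I -> R) (l : I -> R) :
  (forall i, f n i @[n --> \oo] --> l i) ->
  (\sum_(i <- r) f n i) @[n --> \oo] --> \sum_(i <- r) l i.
Proof.
move=> h; elim: r => [|i r IH].
  under eq_fun do rewrite big_nil. rewrite big_nil; exact: cvg_cst.
under eq_fun do rewrite big_cons. rewrite big_cons; exact: cvgD.
Qed.

Lemma pol_le1 (R : realType) nS nA (pi : 'M[R]_(nS,nA)) s a : policies pi -> pi s a <= 1.
Proof.
case=> p0 p1; rewrite -(p1 s) (bigD1 a) //= lerDl.
by apply: sumr_ge0 => b _; exact: p0.
Qed.


Lemma sd_prop (R : realType) nS nA (P : 'I_nA -> 'M[R]_nS) (xi : 'rV[R]_nS) (pi : 'M[R]_(nS,nA)) :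
  (forall a s s', 0 <= P a s s') -> (forall a s, \sum_s' P a s s' = 1) ->
  (forall s, 0 < xi 0 s) -> \sum_s xi 0 s = 1 -> policies pi ->
  forall t, (forall s, 0 <= state_dist P xi pi t 0 s) /\ \sum_s state_dist P xi pi t 0 s = 1.
Proof.
move=> P0 P1 xi0 xi1 [p0 p1]; elim=> [|t [h0 h1]] /=.
  by split => // s; exact: ltW.
split.
  move=> s'; rewrite mxE; apply: sumr_ge0 => s _; apply: sumr_ge0 => a _.
  by rewrite !mulr_ge0.
rewrite -[RHS]h1; under eq_bigr do rewrite mxE.
rewrite exchange_big /=; apply: eq_bigr => s _.
rewrite exchange_big /= -[RHS]mulr1 -(p1 s) mulr_sumr; apply: eq_bigr => a _.
by rewrite -mulr_sumr P1 mulr1.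
Qed.

Lemma geo_bound (R : realType) (g : R) n : 0 <= g < 1 -> \sum_(0 <= t < n) g ^+ t <= (1 - g)^-1.
Proof.
move=> /andP[g0 g1].
have e : forall n, \sum_(0 <= t < n) g ^+ t * (1 - g) = 1 - g ^+ n.
  elim=> [|k IH]; first by rewrite big_geq // expr0 subrr.
  by rewrite big_nat_recr //= IH exprS; ring.
rewrite -(ler_pM2r (_ : 0 < 1 - g)) ?subr_gt0 // mulVf ?gt_eqF ?subr_gt0 //.
rewrite mulr_suml e lerBlDr lerDl; exact: exprn_ge0.
Qed.

Lemma series_cvg (R : realType) (u : nat -> R) (g : R) : 0 <= g < 1 ->
  (forall t, 0 <= u t <= g ^+ t) ->
  (\sum_(0 <= t < n) u t) @[n --> \oo] --> rseries u.
Proof.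
move=> hg hu; apply: nondecreasing_is_cvgn.
  move=> n m nm; rewrite (big_cat_nat (leq0n n) nm) /= lerDl.
  by apply: sumr_ge0 => t _; case/andP: (hu t).
exists (1 - g)^-1 => _ [n _ <-]; apply: le_trans (geo_bound n hg).
by apply: ler_sum => t _; case/andP: (hu t).
Qed.

Lemma series_ge0 (R : realType) (u : nat -> R) (g : R) : 0 <= g < 1 ->
  (forall t, 0 <= u t <= g ^+ t) -> u 0%N <= rseries u.
Proof.
move=> hg hu; apply: limr_ge; first exact: (series_cvg hg hu).
exists 1%N => // n /= n1.
rewrite (big_cat_nat (leq0n 1) n1) /= big_nat1 lerDl.
by apply: sumr_ge0 => t _; case/andP: (hu t).
Qed.

Definition mdp_ok (R : realType) nS nA (P : 'I_nA -> 'M[R]_nS) (xi : 'rV[R]_nS) (gamma : R) :=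
  [/\ (forall a s s', 0 <= P a s s'), (forall a s, \sum_s' P a s s' = 1),
      (forall s, 0 < xi 0 s), \sum_s xi 0 s = 1 & 0 < gamma < 1].

Definition mu (R : realType) nS nA (P : 'I_nA -> 'M[R]_nS) (xi : 'rV[R]_nS) (gamma : R)
  (pi : 'M[R]_(nS,nA)) (s : 'I_nS) : R :=
  rseries (fun t => gamma ^+ t * state_dist P xi pi t 0 s).

Lemma term_bound (R : realType) nS nA (P : 'I_nA -> 'M[R]_nS) (xi : 'rV[R]_nS) (gamma : R) pi :
  mdp_ok P xi gamma -> policies pi ->
  forall s t, 0 <= gamma ^+ t * state_dist P xi pi t 0 s <= gamma ^+ t.
Proof.
case=> P0 P1 xi0 xi1 /andP[g0 g1] ppi s t.
have [h0 h1] := sd_prop P0 P1 xi0 xi1 ppi t.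
have gt0 : 0 <= gamma ^+ t by rewrite exprn_ge0 // ltW.
rewrite mulr_ge0 ?h0 //= -[X in _ <= X]mulr1 ler_wpM2l //.
rewrite -h1 (bigD1 s) //= lerDl; apply: sumr_ge0 => *; exact: h0.
Qed.

Lemma mu_cvg (R : realType) nS nA (P : 'I_nA -> 'M[R]_nS) (xi : 'rV[R]_nS) (gamma : R) pi s :
  mdp_ok P xi gamma -> policies pi ->
  (\sum_(0 <= t < n) gamma ^+ t * state_dist P xi pi t 0 s) @[n --> \oo] --> mu P xi gamma pi s.
Proof.
move=> ok ppi; have [_ _ _ _ /andP[g0 g1]] := ok.
apply: (@series_cvg _ _ gamma); first by rewrite ltW.
exact: term_bound.
Qed.

Lemma mu_ge_xi (R : realType) nS nA (P : 'I_nA -> 'M[R]_nS) (xi : 'rV[R]_nS) (gamma : R) pi s :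
  mdp_ok P xi gamma -> policies pi -> xi 0 s <= mu P xi gamma pi s.
Proof.
move=> ok ppi; have [_ _ _ _ /andP[g0 g1]] := ok.
have := @series_ge0 _ (fun t => gamma ^+ t * state_dist P xi pi t 0 s) gamma.
rewrite /= expr0 mul1r; apply; first by rewrite ltW.
exact: term_bound.
Qed.

Lemma occ_eq (R : realType) nS nA (P : 'I_nA -> 'M[R]_nS) (xi : 'rV[R]_nS) (gamma : R) pi s a :
  mdp_ok P xi gamma -> policies pi ->
  occupancy P xi gamma pi s a = mu P xi gamma pi s * pi s a.
Proof.
move=> ok ppi; rewrite mxE /rseries; apply: (cvg_lim (@Rhausdorff R)).
rewrite (_ : (fun n => \sum_(0 <= t < n) gamma ^+ t * (state_dist P xi pi t 0 s * pi s a)) =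
   (fun n => (\sum_(0 <= t < n) gamma ^+ t * state_dist P xi pi t 0 s) * pi s a)).
  exact: (cvgMr_tmp (b := pi s a) (mu_cvg (s:=s) ok ppi)).
apply: funext => n /=.
by rewrite mulr_suml; apply: eq_bigr => t _; rewrite mulrA.
Qed.

Lemma psum_rec (R : realType) nS nA (P : 'I_nA -> 'M[R]_nS) (xi : 'rV[R]_nS) (gamma : R) pi s' n :
  \sum_(0 <= t < n.+1) gamma ^+ t * state_dist P xi pi t 0 s' =
  xi 0 s' + gamma * \sum_s \sum_a (\sum_(0 <= t < n) gamma ^+ t * state_dist P xi pi t 0 s) * pi s a * P a s s'.
Proof.
rewrite big_nat_recl // expr0 mul1r /=; congr (_ + _).
transitivity (\sum_(0 <= t < n) \sum_s \sum_a gamma * (gamma ^+ t * state_dist P xi pi t 0 s * pi s a * P a s s')).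
  apply: eq_bigr => t _; rewrite mxE exprS -mulrA !mulr_sumr.
  by apply: eq_bigr => s _; rewrite !mulr_sumr; apply: eq_bigr => a _; ring.
rewrite mulr_sumr exchange_big /=; apply: eq_bigr => s _.
rewrite mulr_sumr exchange_big /=; apply: eq_bigr => a _.
rewrite mulr_suml mulr_suml mulr_sumr; apply: eq_bigr => t _; ring.
Qed.

Lemma mu_fix (R : realType) nS nA (P : 'I_nA -> 'M[R]_nS) (xi : 'rV[R]_nS) (gamma : R) pi s' :
  mdp_ok P xi gamma -> policies pi ->
  mu P xi gamma pi s' = xi 0 s' + gamma * \sum_s \sum_a mu P xi gamma pi s * pi s a * P a s s'.
Proof.
move=> ok ppi.
have h1 : (\sum_(0 <= t < n.+1) gamma ^+ t * state_dist P xi pi t 0 s') @[n --> \oo] --> mu P xi gamma pi s'.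
  have := mu_cvg (s:=s') ok ppi; rewrite -cvg_shiftS; exact.
have h2 : (\sum_(0 <= t < n.+1) gamma ^+ t * state_dist P xi pi t 0 s') @[n --> \oo] -->
     xi 0 s' + gamma * \sum_s \sum_a mu P xi gamma pi s * pi s a * P a s s'.
  under eq_fun do rewrite psum_rec.
  apply: cvgD; first exact: cvg_cst.
  apply: cvgMl_tmp; apply: cvg_sum_seq => s; apply: cvg_sum_seq => a.
  apply: cvgMr_tmp; apply: cvgMr_tmp; exact: mu_cvg.
exact: (cvg_unique (@Rhausdorff R) h1 h2).
Qed.

Lemma mu_unique (R : realType) nS nA (P : 'I_nA -> 'M[R]_nS) (xi : 'rV[R]_nS) (gamma : R) pi
  (nu : 'I_nS -> R) :
  mdp_ok P xi gamma -> policies pi ->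
  (forall s', nu s' = xi 0 s' + gamma * \sum_s \sum_a nu s * pi s a * P a s s') ->
  forall s, nu s = mu P xi gamma pi s.
Proof.
move=> ok ppi hnu; have [P0 P1 _ _ /andP[g0 g1]] := ok; have [p0 p1] := ppi.
set e := fun s => nu s - mu P xi gamma pi s.
have he : forall s', e s' = gamma * \sum_s \sum_a e s * pi s a * P a s s'.
  move=> s'; rewrite /e {1}hnu {1}mu_fix //.
  have -> : \sum_s \sum_a (nu s - mu P xi gamma pi s) * pi s a * P a s s' =
     \sum_s \sum_a nu s * pi s a * P a s s' - \sum_s \sum_a mu P xi gamma pi s * pi s a * P a s s'.
    rewrite -sumrB; apply: eq_bigr => s _; rewrite -sumrB; apply: eq_bigr => a _; ring.
  ring.
have T : \sum_s' `|e s'| <= \sum_s' gamma * \sum_s \sum_a `|e s| * pi s a * P a s s'.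
  apply: ler_sum => s' _; rewrite he normrM (ger0_norm (ltW g0)); apply: ler_wpM2l; first exact: ltW.
  apply: (le_trans (ler_norm_sum _ _ _)); apply: ler_sum => s _.
  apply: (le_trans (ler_norm_sum _ _ _)); apply: ler_sum => a _.
  by rewrite !normrM (ger0_norm (p0 s a)) (ger0_norm (P0 a s s')).
have T2 : \sum_s' gamma * \sum_s \sum_a `|e s| * pi s a * P a s s' = gamma * \sum_s `|e s|.
  rewrite -mulr_sumr exchange_big /=; congr (_ * _); apply: eq_bigr => s _.
  rewrite exchange_big /= -[RHS]mulr1 -(p1 s) mulr_sumr; apply: eq_bigr => a _.
  by rewrite -mulr_sumr P1 mulr1.
rewrite T2 in T.
have T0 : 0 <= \sum_s `|e s| by apply: sumr_ge0 => s _; exact: normr_ge0.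
have Z : \sum_s `|e s| <= 0.
  move: T T0; move: (\sum_s `|e s|) => x; nra.
move=> s; apply/eqP; rewrite -subr_eq0 -normr_le0 -/(e s).
apply: le_trans Z; rewrite (bigD1 s) //= lerDl.
by apply: sumr_ge0 => *; exact: normr_ge0.
Qed.

Lemma mu_ge0 (R : realType) nS nA (P : 'I_nA -> 'M[R]_nS) (xi : 'rV[R]_nS) (gamma : R) pi s :
  mdp_ok P xi gamma -> policies pi -> 0 <= mu P xi gamma pi s.
Proof.
move=> ok ppi; have [_ _ xi0 _ _] := ok.
exact: le_trans (ltW (xi0 s)) (mu_ge_xi s ok ppi).
Qed.

Lemma occ_in (R : realType) nS nA (P : 'I_nA -> 'M[R]_nS) (xi : 'rV[R]_nS) (gamma : R) pi :
  mdp_ok P xi gamma -> policies pi -> occ_polytope P xi gamma (occupancy P xi gamma pi).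
Proof.
move=> ok ppi; have [p0 p1] := ppi; split.
  by move=> s a; rewrite occ_eq // mulr_ge0 ?mu_ge0 ?p0.
move=> s'; rewrite sumrB.
under eq_bigr do rewrite occ_eq //.
rewrite -mulr_sumr p1 mulr1 (mu_fix s' ok ppi) -mulr_sumr.
have -> : \sum_a \sum_s P a s s' * occupancy P xi gamma pi s a =
          \sum_s \sum_a mu P xi gamma pi s * pi s a * P a s s'.
  rewrite exchange_big /=; apply: eq_bigr => s _; apply: eq_bigr => a _.
  by rewrite occ_eq // mulrC.
by rewrite addrK.
Qed.

Lemma coef_bound (R : realType) (x ma ms Mb al : R) :
  0 < x -> x <= ma -> 0 <= ms -> ms <= Mb * x -> 0 <= al ->
  (al * ms / ma) ^+ 2 <= (al * Mb) ^+ 2.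
Proof.
move=> x0 xma ms0 msM al0.
have ma0 : 0 < ma by exact: lt_le_trans xma.
have c0 : 0 <= al * ms / ma by rewrite divr_ge0 ?mulr_ge0 // ltW.
have Mb0 : 0 <= Mb.
  by move: (le_trans ms0 msM); rewrite pmulr_lge0.
rewrite ler_pXn2r ?nnegrE //; last exact: mulr_ge0.
rewrite -mulrA ler_wpM2l // ler_pdivrMr //.
apply: (le_trans msM); rewrite ler_wpM2l //.
Qed.

Lemma pol_sqdiff (R : realType) nS nA (pi pi' : 'M[R]_(nS,nA)) s :
  policies pi -> policies pi' -> \sum_a (pi' s a - pi s a) ^+ 2 <= 2.
Proof.
move=> pp pp'; have [p0 p1] := pp; have [q0 q1] := pp'.
apply: (@le_trans _ _ (\sum_a (pi' s a + pi s a))).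
  apply: ler_sum => a _.
  have := p0 s a; have := q0 s a; have := pol_le1 s a pp; have := pol_le1 s a pp'.
  move: (pi s a) (pi' s a) => u v *; nra.
by rewrite -sumrDx p1 q1.
Qed.


Lemma mixture (R : realType) nS nA (P : 'I_nA -> 'M[R]_nS) (xi : 'rV[R]_nS) (gamma : R)
  (pi pis : 'M[R]_(nS,nA)) (al Mb : R) :
  mdp_ok P xi gamma -> policies pi -> policies pis -> 0 <= al <= 1 ->
  (forall s, mu P xi gamma pis s <= Mb * xi 0 s) ->
  exists pa, [/\ policies pa,
    occupancy P xi gamma pa = al *: occupancy P xi gamma pis + (1 - al) *: occupancy P xi gamma pi
    & sq (pa - pi) <= nS%:R * 2 * (al * Mb) ^+ 2].
Proof.
move=> ok ppi ppis /andP[al0 al1] hMb.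
have [P0 P1 xi0 xi1 _] := ok; have [p0 p1] := ppi; have [q0 q1] := ppis.
set m := mu P xi gamma pi; set ms := mu P xi gamma pis.
set ma := fun s => al * ms s + (1 - al) * m s.
have ma_ge : forall s, xi 0 s <= ma s.
  move=> s; have := mu_ge_xi s ok ppi; have := mu_ge_xi s ok ppis.
  rewrite -/m -/ms /ma; move: (m s) (ms s) (xi 0 s) => u v w hv hu; nra.
have ma0 : forall s, 0 < ma s by move=> s; exact: lt_le_trans (xi0 s) (ma_ge s).
set pa := \matrix_(s, a) ((al * ms s * pis s a + (1 - al) * m s * pi s a) / ma s).
have pa_ma : forall s a, ma s * pa s a = al * ms s * pis s a + (1 - al) * m s * pi s a.
  by move=> s a; rewrite mxE mulrC divfK // gt_eqF.
have ppa : policies pa.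
  split.
    move=> s a; rewrite mxE; apply: divr_ge0; last exact: ltW (ma0 s).
    apply: addr_ge0; apply: mulr_ge0; try apply: mulr_ge0;
      by [exact: al0 | exact: (mu_ge0 _ ok ppi) | exact: (mu_ge0 _ ok ppis) | exact: p0 | exact: q0 | rewrite subr_ge0].
  move=> s; apply: (@mulfI _ (ma s)); first by rewrite gt_eqF.
  rewrite mulr1 mulr_sumr.
  under eq_bigr do rewrite pa_ma.
  by rewrite -sumrDx -!mulr_sumr p1 q1 !mulr1.
have mupa : forall s, ma s = mu P xi gamma pa s.
  apply: mu_unique => // s'.
  under eq_bigr do under eq_bigr do rewrite pa_ma.
  rewrite /ma /m /ms (mu_fix s' ok ppi) (mu_fix s' ok ppis) -/m -/ms.
  have -> : \sum_s \sum_a (al * ms s * pis s a + (1 - al) * m s * pi s a) * P a s s' =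
     al * (\sum_s \sum_a ms s * pis s a * P a s s') + (1 - al) * \sum_s \sum_a m s * pi s a * P a s s'.
    rewrite !mulr_sumr sumrDx; apply: eq_bigr => s _.
    rewrite !mulr_sumr sumrDx; apply: eq_bigr => a _; ring.
  ring.
exists pa; split => //.
  apply/matrixP => s a.
  have := occ_eq s a ok ppa; have := occ_eq s a ok ppi; have := occ_eq s a ok ppis.
  rewrite !mxE => -> -> ->; rewrite -mupa mulrC divfK ?gt_eqF // -/m -/ms; ring.
have ent : forall s a, (pa - pi) s a = (al * ms s / ma s) * (pis s a - pi s a).
  move=> s a; apply: (@mulfI _ (ma s)); first by rewrite gt_eqF.
  rewrite !mxE mulrBr [ma s * (_ / _)]mulrC divfK ?gt_eqF //.
  rewrite [RHS]mulrA [in RHS](mulrC (ma s)) divfK ?gt_eqF // /ma; ring.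
rewrite /sq /ip.
apply: (@le_trans _ _ (\sum_(s < nS) 2 * (al * Mb) ^+ 2)).
  apply: ler_sum => s _.
  apply: (@le_trans _ _ (\sum_a (al * Mb) ^+ 2 * (pis s a - pi s a) ^+ 2)).
    apply: ler_sum => a _; rewrite ent -expr2 exprMn; apply: ler_wpM2r; first exact: sqr_ge0.
    exact: (coef_bound (xi0 s) (ma_ge s) (mu_ge0 s ok ppis) (hMb s) al0).
  rewrite -mulr_sumr mulrC; apply: ler_wpM2r; first exact: sqr_ge0.
  exact: pol_sqdiff.
by rewrite sumr_const card_ord -mulrnAl mulr_natl.
Qed.


Lemma rate (R : realType) (d : nat -> R) (K : R) : 0 <= K ->
  (forall k (al : R), 0 <= al <= 1 -> d k.+1 <= (1 - al) * d k + K * al ^+ 2) ->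
  forall k, (1 <= k)%N -> d k <= 4 * K / k.+1%:R.
Proof.
move=> K0 hd; elim=> [//|k IH] _.
case: k IH => [_|k IH].
  have := hd 0%N 1; rewrite lexx ler01 => /(_ isT); rewrite subrr mul0r add0r expr1n mulr1.
  move=> h; apply: (le_trans h); rewrite ler_pdivlMr; last by rewrite ltr0n.
  lra.
have := IH isT; move: IH => _ IH.
set n : R := k.+1%:R.
have n1 : 1 <= n by rewrite /n ler1n.
have e1 : (k.+2%:R : R) = n + 1 by rewrite /n -addn1 natrD.
have e2 : (k.+3%:R : R) = n + 2 by rewrite /n -addn2 natrD.
rewrite e1 in IH; rewrite e2.
set u := (n + 1)^-1; set v := (n + 2)^-1.
have hu : u * (n + 1) = 1 by rewrite mulVf // gt_eqF //; lra.
have hv : v * (n + 2) = 1 by rewrite mulVf // gt_eqF //; lra.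
have v0 : 0 <= v by rewrite invr_ge0; lra.
have u0 : 0 <= u by rewrite invr_ge0; lra.
have v12 : 2 * v <= 1 by nra.
have uv : u - v = u * v by nra.
have vu : v <= u by nra.
have := hd k.+1 (2 * v); rewrite v12 mulr_ge0 // => /(_ isT) h.
apply: (le_trans h).
have h2 : (1 - 2 * v) * d k.+1 <= (1 - 2 * v) * (4 * K * u).
  by apply: ler_wpM2l; [lra | exact: IH].
have h3 : 0 <= K * v * (u - v) by rewrite !mulr_ge0 // subr_ge0.
nra.
Qed.

Unset Implicit Arguments.

Theorem theorem5 (R : realType) (nS nA : nat)
  (P : 'I_nA -> 'M[R]_nS) (xi : 'rV[R]_nS) (gamma : R)
  (F : 'M[R]_(nS, nA) -> R^o) (L : R)
  (pistar : 'M[R]_(nS, nA)) (pis : nat -> 'M[R]_(nS, nA)) :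
  (* finite MDP *)
  (forall a s s', 0 <= P a s s') ->
  (forall a s, \sum_s' P a s s' = 1) ->
  (forall s, 0 < xi 0 s) -> \sum_s xi 0 s = 1 ->
  0 < gamma < 1 ->
  (* F concave on an open (convex) neighbourhood U of L *)
  (exists U : set 'M[R]_(nS, nA),
      open U /\ occ_polytope P xi gamma `<=` U /\
      (forall x y t, U x -> U y -> 0 <= t <= 1 -> U (t *: x + (1 - t) *: y)) /\
      (forall x y t, U x -> U y -> 0 <= t <= 1 ->
         t * F x + (1 - t) * F y <= F (t *: x + (1 - t) *: y))) ->
  (* R := F o Lambda is differentiable on Delta with L-Lipschitz gradient *)
  0 < L ->
  (forall pi, policies pi -> differentiable (fun p => F (occupancy P xi gamma p)) pi) ->
  (forall pi pi', policies pi -> policies pi' ->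
     frob_norm (grad (fun p => F (occupancy P xi gamma p)) pi
                - grad (fun p => F (occupancy P xi gamma p)) pi')
       <= L * frob_norm (pi - pi')) ->
  (* pistar is a global maximizer of R over Delta *)
  policies pistar ->
  (forall pi, policies pi ->
     F (occupancy P xi gamma pi) <= F (occupancy P xi gamma pistar)) ->
  (* projected gradient ascent iterates *)
  policies (pis 0%N) ->
  (forall k, policies (pis k.+1) /\
     forall y, policies y ->
       frob_norm (pis k.+1 - (pis k + L^-1 *:
                    grad (fun p => F (occupancy P xi gamma p)) (pis k)))
       <= frob_norm (y - (pis k + L^-1 *:
                    grad (fun p => F (occupancy P xi gamma p)) (pis k)))) ->
  forall k : nat, (1 <= k)%N ->
    F (occupancy P xi gamma pistar) - F (occupancy P xi gamma (pis k))
      <= 20 * L * nS%:R / ((1 - gamma) ^+ 2 * (k.+1)%:R)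
         * (sup_norm (fun s => dvisit P xi gamma pistar s / xi 0 s)) ^+ 2.
Proof.
move=> P0 P1 xi0 xi1 g01 [U [_ [LU [_ conc]]]] L0 hd hL pstar hmax p0 hstep.
have ok : mdp_ok P xi gamma by split.
have /andP[g0 g1] := g01.
set f := fun p => F (occupancy P xi gamma p).
have pk : forall k, policies (pis k) by case=> [|k] //; case: (hstep k).
set M := sup_norm (fun s => dvisit P xi gamma pistar s / xi 0 s).
set Mb := M / (1 - gamma).
have hMb : forall s, mu P xi gamma pistar s <= Mb * xi 0 s.
  move=> s.
  have hs : dvisit P xi gamma pistar s / xi 0 s <= M.
    apply: le_trans (ler_norm _) _.
    exact: (le_bigmax 0 (fun i => `|dvisit P xi gamma pistar i / xi 0 i|) s).
  have e : dvisit P xi gamma pistar s = (1 - gamma) * mu P xi gamma pistar s by [].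
  rewrite e in hs; rewrite /Mb mulrAC ler_pdivlMr ?subr_gt0 //.
  by rewrite ler_pdivrMr // mulrC in hs.
set K := 7 / 2 * L * nS%:R * Mb ^+ 2.
have K0 : 0 <= K.
  rewrite /K; apply: mulr_ge0; last exact: sqr_ge0.
  apply: mulr_ge0; last exact: ler0n.
  apply: mulr_ge0 (ltW L0); lra.
set d := fun k => f pistar - f (pis k).
have step : forall k (al : R), 0 <= al <= 1 -> d k.+1 <= (1 - al) * d k + K * al ^+ 2.
  move=> k al hal.
  have [pa [ppa occa sqa]] := mixture ok (pk k) pstar hal hMb.
  have cc : al * f pistar + (1 - al) * f (pis k) <= f pa.
    rewrite /f occa; apply: conc => //; apply: LU; exact: occ_in.
  have os := one_step L0 hd hL (pk k) (pk k.+1) ppa (proj2 (hstep k)).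
  rewrite -/f in os.
  have : 7 / 4 * L * sq (pa - pis k) <= K * al ^+ 2.
    apply: le_trans (ler_wpM2l _ sqa) _; first by rewrite mulr_ge0 ?ltW //; lra.
    have -> : 7 / 4 * L * (nS%:R * 2 * (al * Mb) ^+ 2) = K * al ^+ 2 by rewrite /K; field.
    exact: lexx.
  move=> hK; rewrite /d.
  have os' : f pa <= f (pis k.+1) + 7 / 4 * L * sq (pa - pis k) by exact: os.
  move: cc os' hK; move: (f pistar) (f (pis k)) (f (pis k.+1)) (f pa) (7 / 4 * L * sq (pa - pis k)) (K * al ^+ 2).
  move=> a b c e q r h1 h2 h3; nra.
move=> k k1; have := rate K0 step k1; rewrite /d /f -/M => h; apply: (le_trans h).
have hg : 1 - gamma != 0 by rewrite subr_eq0 gt_eqF.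
have hk : (k.+1%:R : R) != 0 by rewrite pnatr_eq0.
set c := L * nS%:R * M ^+ 2 / ((1 - gamma) ^+ 2 * k.+1%:R).
have c0 : 0 <= c.
  rewrite /c; apply: divr_ge0; last by rewrite mulr_ge0 ?sqr_ge0 ?ler0n.
  by rewrite mulr_ge0 ?sqr_ge0 // mulr_ge0 ?ler0n // ltW.
have hk' : (1 + k%:R : R) != 0.
  have h0 := ler0n R k; rewrite gt_eqF //; lra.
have e1 : 4 * K / k.+1%:R = 14 * c.
  by rewrite /K /Mb /c; field; rewrite hk' hg.
have e2 : 20 * L * nS%:R / ((1 - gamma) ^+ 2 * k.+1%:R) * M ^+ 2 = 20 * c.
  by rewrite /c; field; rewrite hk' hg.
rewrite e1 e2; lra.
Qed.
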